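(* Let $V\subseteq\mathbb{A}^n$ be an affine variety defined over $\mathbb{Z}$. Then, with the emerging metric on finite prime fields described in the context, $\mathsf{lm}^{\mathrm{loc}}V(\mathrm{F}_q)=\overline{V(\mathbb{Q})}\subseteq V(\mathbb{R})$: the local ultraproduct of the sets $V(\mathrm{F}_q)$, i.e. the image of $V(\mathrm{F})\cap(\mathrm{F}_{/\mathfrak{l}})^n$ under the coordinatewise quotient map $(\mathrm{F}_{/\mathfrak{l}})^n\to(\mathrm{F}_{/\mathfrak{l}}/\!\approx)^n\cong\mathbb{R}^n$, equals the closure in $\mathbb{R}^n$ of the set of rational points $V(\mathbb{Q})$.
   Context: $V$ is the zero set of finitely many polynomials in $\mathbb{Z}[x_1,\dots,x_n]$, and $V(R)$ denotes its set of points with coordinates in a ring $R$. Let $\mathcal{D}$ be a non-principal ultrafilter on $\mathbb{N}$ containing the set of primes, ${}^*\mathbb{Z}=\mathbb{Z}^{\mathbb{N}}/\mathcal{D}$, $\mathfrak{q}\in{}^*\mathbb{Z}$ the class of $(q)_{q\in\mathbb{N}}$, and $\mathrm{F}={}^*\mathbb{Z}/\mathfrak{q}\,{}^*\mathbb{Z}\cong\prod_{\mathcal{D}}\mathrm{F}_q$ with $\mathrm{F}_q=\mathbb{Z}/q\mathbb{Z}$. Assume there is a model ${}^f\mathbb{Z}$ of arithmetic with $\mathbb{Z}\prec{}^f\mathbb{Z}\prec{}^*\mathbb{Z}$ and $\mathfrak{q}>k$ for all $k\in{}^f\mathbb{Z}$, and let $\mathfrak{l}\in{}^f\mathbb{Z}$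 be a positive infinite integer (so $\mathfrak{l}^n<\mathfrak{q}$ for all $n\in\mathbb{N}$). For $m\in\mathbb{N}$ let $Z(m)=\{k\in{}^*\mathbb{Z}:|k|<\mathfrak{l}^m\}$ (embedded in $\mathrm{F}$ by reduction mod $\mathfrak{q}$), $S_m(\mathrm{F})=\{z\in\mathrm{F}:\exists k_1,k_2\in Z(m),k_2\ne0,\ z=k_1k_2^{-1},\ |k_1|/|k_2|\le m\}$, $\mathrm{F}_{/\mathfrak{l}}=\bigcup_mS_m(\mathrm{F})$, $\|z\|=\mathrm{st}(|k_1|/|k_2|)$ for the minimal such pair $(k_1,k_2)$, $\mathsf{d}(z_1,z_2)=\|z_1-z_2\|$, and $z_1\approx z_2$ iff $\mathsf{d}(z_1,z_2)\le 1/n$ for all $n\in\mathbb{N}$. The quotient $\mathrm{F}_{/\mathfrak{l}}/\!\approx$, with induced operations and metric, is identified with $\mathbb{R}$ (the local ultraproduct $\mathsf{lm}^{\mathrm{loc}}\mathrm{F}_q=\mathbb{R}$), and $n$-tuples are treated coordinatewise. *)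

(* Defs.v *)
From HB Require Import structures.
From mathcomp Require Import all_boot all_order all_algebra.
From mathcomp Require Import all_classical all_reals all_analysis.
From mathcomp Require mpoly.
From Stdlib Require Lists.List.
Set Implicit Arguments. Unset Strict Implicit. Unset Printing Implicit Defensive.
Import Order.TTheory GRing.Theory Num.Theory.
Local Open Scope ring_scope.

Definition nonprincipal_ultrafilter (D : (nat -> Prop) -> Prop) : Prop :=
  [/\ D (fun _ => True), ~ D (fun _ => False),
      ((forall A B : nat -> Prop, D A -> (forall q, A q -> B q) -> D B) /\
      (forall A B : nat -> Prop, D A -> D B -> D (fun q => A q /\ B q))),
      (forall A : nat -> Prop, D A \/ D (fun q => ~ A q))
    & (forall k : nat, ~ D (fun q => q = k))].

(* Elements of *Z are represented by sequences nat -> int; *Z-relations hold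
   iff they hold on a D-large set of indices. The element q (frak q) is the
   class of (q)_q. Elements of F = *Z / q *Z are represented by sequences
   too, equality in F being D-almost-everywhere congruence modulo q. *)
Definition hyp := nat -> int.

Definition F_eq (D : (nat -> Prop) -> Prop) (a b : hyp) : Prop :=
  D (fun q => (q%:Z %| a q - b q)%Z).

Definition good_l (D : (nat -> Prop) -> Prop) (l : hyp) : Prop :=
  (forall k : nat, D (fun q => k%:Z < l q)) /\
  (forall n : nat, D (fun q => l q ^+ n < q%:Z)).

Definition inZm (D : (nat -> Prop) -> Prop) (l : hyp) (m : nat) (k : hyp) :=
  D (fun q => `|k q| < l q ^+ m).

Definition frac_rep (D : (nat -> Prop) -> Prop) (l : hyp) (m : nat)
    (z k1 k2 : hyp) : Prop :=
  [/\ inZm D l m k1, inZm D l m k2, D (fun q => k2 q != 0)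
    & F_eq D (fun q => z q * k2 q) k1].

Definition in_Sm (D : (nat -> Prop) -> Prop) (l : hyp) (m : nat) (z : hyp) :=
  exists k1 k2, frac_rep D l m z k1 k2 /\
    D (fun q => `|k1 q| <= m%:Z * `|k2 q|).

Definition in_Fl (D : (nat -> Prop) -> Prop) (l : hyp) (z : hyp) :=
  exists m, in_Sm D l m z.

(* The identification F_{/l}/~ = R : z = k1 k2^{-1} goes to the standard
   part r of the hyperrational k1/k2, i.e. |k1/k2 - r| <= 1/(n+1) for all n. *)
Definition st_of (R : realType) (D : (nat -> Prop) -> Prop) (l : hyp)
    (z : hyp) (r : R) : Prop :=
  exists m k1 k2, frac_rep D l m z k1 k2 /\
    forall n : nat, D (fun q =>
      `|(k1 q)%:~R - r * (k2 q)%:~R| <= `|(k2 q)%:~R| / (n.+1)%:R).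

Definition in_VF (D : (nat -> Prop) -> Prop) (n : nat)
    (Ps : seq (mpoly.mpoly n int)) (z : 'I_n -> hyp) : Prop :=
  forall P, Stdlib.Lists.List.In P Ps -> F_eq D (fun q => mpoly.meval (fun i => z i q) P) (fun _ => 0).

Definition loc_ultraproduct (R : realType) (D : (nat -> Prop) -> Prop)
    (l : hyp) (n : nat) (Ps : seq (mpoly.mpoly n int)) : set 'rV[R]_n :=
  [set x | exists z : 'I_n -> hyp,
     [/\ in_VF D Ps z, (forall i, in_Fl D l (z i)) & (forall i, st_of D l (z i) (x 0 i))]].

Definition rational_points (R : realType) (n : nat)
    (Ps : seq (mpoly.mpoly n int)) : set 'rV[R]_n :=
  [set x | exists y : 'I_n -> rat,
     (forall P, Stdlib.Lists.List.In P Ps -> mpoly.mmap (fun c : int => c%:~R) y P = 0) /\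
     x = \row_i ratr (y i)].

Definition real_points (R : realType) (n : nat)
    (Ps : seq (mpoly.mpoly n int)) : set 'rV[R]_n :=
  [set x | forall P, Stdlib.Lists.List.In P Ps -> mpoly.mmap (fun c : int => c%:~R) (fun i => x 0 i) P = 0].

(* Main.v *)
Require Import Defs.
From HB Require Import structures.
From mathcomp Require Import all_boot all_order all_algebra.
From mathcomp Require Import all_classical all_reals all_analysis.
From mathcomp Require mpoly.
From Stdlib Require Lists.List.
From mathcomp Require Import zify.
Import numFieldTopology.Exports.
Local Open Scope classical_set_scope.

Module Helpers.
Import Order.TTheory GRing.Theory Num.Theory.
Local Open Scope ring_scope.
Section Poly.
Variable n : nat.
Implicit Type P : mpoly.mpoly n int.

Definition mexp (m : mpoly.multinom n) (i : 'I_n) : nat := mpoly.fun_of_multinom m i.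

Definition dg P : nat := (\max_(m <- mpoly.msupp P) mpoly.mdeg m)%N.

Definition hom (S : comRingType) (a b : 'I_n -> S) P : S :=
  \sum_(m <- mpoly.msupp P) (mpoly.mcoeff m P)%:~R *
     \prod_(i < n) (a i ^+ mexp m i * b i ^+ (dg P - mexp m i)).

Definition pev (S : comRingType) (a : 'I_n -> S) P : S :=
  mpoly.mmap (fun c : int => c%:~R) a P.

Lemma eq_big_In (R : Type) (idx : R) (op : R -> R -> R) (T : Type) (s : seq T) (F G : T -> R) :
  (forall x, Stdlib.Lists.List.In x s -> F x = G x) ->
  \big[op/idx]_(x <- s) F x = \big[op/idx]_(x <- s) G x.
Proof.
elim: s => [|x s IH] h; first by rewrite !big_nil.
rewrite !big_cons h /=; last by left.
by rewrite IH // => y hy; apply: h; right.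
Qed.

Lemma le_bigmax_In (T : Type) (s : seq T) (F : T -> nat) x :
  Stdlib.Lists.List.In x s -> (F x <= \max_(y <- s) F y)%N.
Proof.
elim: s => [|y s IH] //= [->|h]; rewrite big_cons.
  exact: leq_maxl.
exact: leq_trans (IH h) (leq_maxr _ _).
Qed.


Arguments hom {S}.
Arguments pev {S}.

Lemma mexp_le P m i : Stdlib.Lists.List.In m (mpoly.msupp P) -> (mexp m i <= dg P)%N.
Proof.
move=> mP; apply: (@leq_trans (mpoly.mdeg m)); last exact: (@le_bigmax_In _ _ (@mpoly.mdeg n) _ mP).
by rewrite mpoly.mdegE (bigD1 i) //= leq_addr.
Qed.

Lemma hom_mul (S : comRingType) (a b : 'I_n -> S) P :
  hom (S:=S) (fun i => a i * b i) b P = \prod_i b i ^+ dg P * pev a P.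
Proof.
rewrite /hom /pev /mpoly.mmap big_distrr /=; apply: eq_big_In => m mP.
rewrite mulrCA; congr (_ * _); rewrite /mpoly.mmap1 -big_split /=.
apply: eq_bigr => i _.
rewrite exprMn -mulrA -exprD subnKC; [exact: mulrC | exact: (@mexp_le P m i mP)].
Qed.

Lemma hom_rmorph (S T : comRingType) (f : {rmorphism S -> T}) (a b : 'I_n -> S) P :
  f (hom a b P) = hom (f \o a) (f \o b) P.
Proof.
rewrite rmorph_sum; apply: eq_bigr => m _.
rewrite rmorphM rmorph_int rmorph_prod; congr (_ * _); apply: eq_bigr => i _.
by rewrite rmorphM !rmorphXn.
Qed.

Lemma pev_rmorph (S T : comRingType) (f : {rmorphism S -> T}) (a : 'I_n -> S) P :
  f (pev a P) = pev (f \o a) P.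
Proof.
rewrite /pev /mpoly.mmap rmorph_sum; apply: eq_bigr => m _.
rewrite rmorphM rmorph_int /mpoly.mmap1 rmorph_prod; congr (_ * _); apply: eq_bigr => i _.
by rewrite !rmorphXn.
Qed.

Lemma meval_pev (v : 'I_n -> int) P : mpoly.meval v P = pev v P.
Proof.
rewrite /mpoly.meval /pev /mpoly.mmap; apply: eq_bigr => m _.
by rewrite intz.
Qed.

Definition csum P : int := \sum_(m <- mpoly.msupp P) `|mpoly.mcoeff m P|.

Lemma ler_sum_In (T : Type) (s : seq T) (F G : T -> int) :
  (forall x, Stdlib.Lists.List.In x s -> F x <= G x) ->
  \sum_(x <- s) F x <= \sum_(x <- s) G x.
Proof.
elim: s => [|x s IH] h; first by rewrite !big_nil.
rewrite !big_cons lerD //; first by apply: h; left.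
by apply: IH => y hy; apply: h; right.
Qed.

Lemma hom_bound (a b : 'I_n -> int) (L : int) P : 0 <= L ->
  (forall i, `|a i| <= L) -> (forall i, `|b i| <= L) ->
  `|hom a b P| <= csum P * L ^+ (dg P * n).
Proof.
move=> L0 ha hb.
apply: le_trans (ler_norm_sum _ _ _) _.
rewrite /csum big_distrl /=; apply: ler_sum_In => m mP.
rewrite normrM intz; apply: ler_wpM2l => //.
rewrite normr_prod exprM.
have -> : L ^+ dg P ^+ n = \prod_(i < n) L ^+ dg P by rewrite prodr_const card_ord.
apply: ler_prod => i _; apply/andP; split => //.
rewrite normrM !normrX -{2}(subnKC (@mexp_le P m i mP)) exprD.
apply: ler_pM; rewrite ?exprn_ge0 //.
  by apply: lerXn2r; rewrite ?nnegrE.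
by apply: lerXn2r; rewrite ?nnegrE.
Qed.
End Poly.
Arguments hom {n S}.
Arguments pev {n S}.
Arguments dg {n}.
Arguments csum {n}.
Arguments hom_rmorph {n S T}.
Arguments pev_rmorph {n S T}.
Arguments hom_bound {n}.
Arguments hom_mul {n S}.

Section Ultra.
Variable D : (nat -> Prop) -> Prop.
Hypothesis hD : nonprincipal_ultrafilter D.

Lemma D_mono (A B : nat -> Prop) : D A -> (forall q, A q -> B q) -> D B.
Proof. by case: hD => _ _ [h _] _ _; apply: h. Qed.

Arguments D_mono {A B}.

Lemma D_and (A B : nat -> Prop) : D A -> D B -> D (fun q => A q /\ B q).
Proof. by case: hD => _ _ [_ h] _ _; apply: h. Qed.

Arguments D_and {A B}.

Lemma D_T : D (fun _ => True).
Proof. by case: hD. Qed.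

Lemma D_ex (A : nat -> Prop) : D A -> exists q, A q.
Proof.
move=> hA; case: (pselect (exists q, A q)) => // hn.
exfalso; case: hD => _ hF _ _ _; apply: hF. change (D (fun _ => False)). exact: (D_mono hA (fun q Aq => hn (ex_intro _ q Aq))).
Qed.

Lemma D_seq (T : Type) (s : seq T) (A : T -> nat -> Prop) :
  (forall x, Stdlib.Lists.List.In x s -> D (A x)) ->
  D (fun q => forall x, Stdlib.Lists.List.In x s -> A x q).
Proof.
elim: s => [|x s IH] h.
  by apply: D_mono D_T _ => q _ x [].
have hx : D (A x) by apply: h; left.
have hs := IH (fun y hy => h y (or_intror hy)).
apply: D_mono (D_and hx hs) _ => q [h1 h2] y /= [<-|hy] //.
exact: h2.
Qed.

Lemma in_In (T : eqType) (x : T) (s : seq T) : x \in s -> Stdlib.Lists.List.In x s.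
Proof.
elim: s => [|y s IH] //=; rewrite inE => /orP [/eqP ->|h]; [by left | right; exact: IH].
Qed.

Lemma D_fin (I : finType) (A : I -> nat -> Prop) :
  (forall i, D (A i)) -> D (fun q => forall i, A i q).
Proof.
move=> h; have := @D_seq I (enum I) A (fun x _ => h x).
move=> hs; apply: D_mono hs _ => q hq i; apply: hq; apply: in_In; exact: mem_enum.
Qed.
End Ultra.
Arguments D_mono {D} hD {A B}.
Arguments D_and {D} hD {A B}.
Arguments D_ex {D} hD {A}.
Arguments D_seq {D} hD {T s A}.
Arguments D_fin {D} hD {I A}.

Lemma dvd_Fq (q : nat) (k : int) : prime q -> (q%:Z %| k)%Z = (k%:~R == 0 :> 'F_q).
Proof. by move=> hq; apply: (dvdz_pcharf (pchar_Fp hq)). Qed.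

Lemma dvd_small (q : nat) (h : int) : (q%:Z %| h)%Z -> `|h| < q%:Z -> h = 0.
Proof.
move=> hd hlt; apply/eqP; apply: contraLR hlt => h0.
rewrite -leNgt; move: hd; rewrite dvdzE /= => hd.
have := dvdn_leq _ hd; rewrite absz_gt0 => /(_ h0) hle.
rewrite -abszE; lia.
Qed.

Lemma key1 (n : nat) (q : nat) (P : mpoly.mpoly n int) (z k1 k2 : 'I_n -> int) :
  prime q -> (q%:Z %| mpoly.meval z P - 0)%Z ->
  (forall i, q%:Z %| z i * k2 i - k1 i)%Z ->
  (forall i, k2 i != 0) -> `|hom k1 k2 P| < q%:Z ->
  pev (fun i => (k1 i)%:~R / (k2 i)%:~R : rat) P = 0.
Proof.
move=> hq hz hk hk2 hlt.
have H0 : hom k1 k2 P = 0.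
  apply: (@dvd_small q _ _ hlt); rewrite dvd_Fq //.
  rewrite (hom_rmorph (intr : {rmorphism int -> 'F_q})).
  have -> : (intr : int -> 'F_q) \o k1 = fun i => (z i)%:~R * (k2 i)%:~R.
    apply: boolp.funext => i /=; have := hk i; rewrite dvd_Fq // rmorphB rmorphM /= subr_eq0.
    by move/eqP.
  rewrite hom_mul.
  have -> : pev (fun i => (z i)%:~R : 'F_q) P = (mpoly.meval z P)%:~R.
    by rewrite meval_pev (pev_rmorph (intr : {rmorphism int -> 'F_q})).
  move: hz; rewrite subr0 dvd_Fq // => /eqP ->; by rewrite mulr0.
have := congr1 (intr : int -> rat) H0; rewrite rmorph0.
rewrite (hom_rmorph (intr : {rmorphism int -> rat})).
have -> : (intr : int -> rat) \o k1 = fun i => ((k1 i)%:~R / (k2 i)%:~R) * (k2 i)%:~R.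
  apply: boolp.funext => i /=; rewrite divfK // intr_eq0; exact: hk2.
rewrite hom_mul => /eqP; rewrite mulf_eq0 => /orP [/eqP hp|/eqP //].
exfalso; move: hp; apply/eqP; apply/prodf_neq0 => i _ /=.
by rewrite expf_neq0 // intr_eq0.
Qed.

Lemma bound_q (n q : nat) (P : mpoly.mpoly n int) (k1 k2 : 'I_n -> int) (lq : int) (M : nat) :
  1 <= lq -> (forall i, `|k1 i| <= lq ^+ M) -> (forall i, `|k2 i| <= lq ^+ M) ->
  csum P < lq -> lq ^+ (M * (dg P * n)).+1 < q%:Z -> `|hom k1 k2 P| < q%:Z.
Proof.
move=> l1 h1 h2 hc hq.
have l0 : 0 <= lq by apply: le_trans l1.
apply: le_lt_trans (hom_bound k1 k2 (lq ^+ M) P _ h1 h2) _; first exact: exprn_ge0.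
apply: le_lt_trans hq; rewrite -exprM exprS.
apply: ler_wpM2r; first exact: exprn_ge0.
exact: ltW.
Qed.

Lemma Fp_val (q : nat) (a : 'F_q) : prime q -> ((Posz (nat_of_ord a))%:~R : 'F_q) = a.
Proof.
move=> hq; apply: val_inj => /=.
have -> : ((Posz (nat_of_ord a))%:~R : 'F_q) = (nat_of_ord a)%:R by [].
rewrite val_Fp_nat // modn_small //.
have := ltn_ord a; move=> h; apply: leq_trans h _; by rewrite Fp_cast.
Qed.

Lemma key2 (n q : nat) (P : mpoly.mpoly n int) (w : 'I_n -> rat) :
  prime q -> pev w P = 0 -> (forall i, ~~ (q%:Z %| denq (w i))%Z) ->
  (q%:Z %| mpoly.meval (fun i => Posz (nat_of_ord
       (((numq (w i))%:~R / (denq (w i))%:~R) : 'F_q))) P - 0)%Z.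
Proof.
move=> hq hw hd.
have Hh : hom (fun i => numq (w i)) (fun i => denq (w i)) P = 0.
  apply/eqP; rewrite -(intr_eq0 rat) (hom_rmorph (intr : {rmorphism int -> rat})).
  have -> : (intr : int -> rat) \o (fun i => numq (w i)) = fun i => w i * (denq (w i))%:~R.
    by apply: boolp.funext => i /=; rewrite numqE.
  by rewrite hom_mul hw mulr0.
rewrite subr0 dvd_Fq // meval_pev (pev_rmorph (intr : {rmorphism int -> 'F_q})).
have hd' : forall i, ((denq (w i))%:~R : 'F_q) != 0.
  by move=> i; rewrite -dvd_Fq //; exact: hd.
have : \prod_i ((intr : int -> 'F_q) \o (fun i => denq (w i))) i ^+ dg P *
   pev ((intr : int -> 'F_q) \o (fun i => Posz (nat_of_ord
       (((numq (w i))%:~R / (denq (w i))%:~R) : 'F_q)))) P = 0.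
  rewrite -hom_mul.
  have -> : (fun i => ((intr : int -> 'F_q) \o (fun i => Posz (nat_of_ord
       (((numq (w i))%:~R / (denq (w i))%:~R) : 'F_q)))) i *
       ((intr : int -> 'F_q) \o (fun i => denq (w i))) i)
     = (intr : int -> 'F_q) \o (fun i => numq (w i)).
    apply: boolp.funext => i; rewrite /comp (Fp_val q _ hq) divfK //; exact: hd'.
  by rewrite -(hom_rmorph (intr : {rmorphism int -> 'F_q})) Hh rmorph0.
move/eqP; rewrite mulf_eq0 => /orP [/eqP hp|//].
exfalso; move: hp; apply/eqP; apply/prodf_neq0 => i _ /=.
by rewrite expf_neq0 //; exact: hd'.
Qed.

Local Open Scope classical_set_scope.

Lemma loc_sub_closure (R : realType) (D : (nat -> Prop) -> Prop) (l : hyp) (n : nat)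
    (Ps : seq (mpoly.mpoly n int)) :
  nonprincipal_ultrafilter D -> D (fun q => prime q) -> good_l D l ->
  @loc_ultraproduct R D l n Ps `<=` closure (@rational_points R n Ps).
Proof.
move=> hD hp [hl1 hl2] x [z [hV _ hst]].
have hex : forall i, exists t : nat * hyp * hyp,
   frac_rep D l t.1.1 (z i) t.1.2 t.2 /\
   (forall N : nat, D (fun q => `|(t.1.2 q)%:~R - x 0 i * (t.2 q)%:~R| <= `|(t.2 q)%:~R| / (N.+1)%:R)).
  by move=> i; case: (hst i) => m [k1 [k2 [h1 h2]]]; exists (m, k1, k2).
have [f hf] := boolp.choice hex.
pose Mx := (\max_i (f i).1.1)%N.
move=> B /nbhs_ballP [e e0 eB].
have [N hN] : exists N : nat, (N.+1%:R)^-1 < e.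
  exists (Num.Def.trunc e^-1); rewrite invf_plt ?posrE //; exact: truncnS_gt.
have H1 : D (fun q => forall i, [/\ `|(f i).1.2 q| < l q ^+ (f i).1.1,
    `|(f i).2 q| < l q ^+ (f i).1.1, (f i).2 q != 0,
    (q%:Z %| z i q * (f i).2 q - (f i).1.2 q)%Z &
    `|((f i).1.2 q)%:~R - x 0 i * ((f i).2 q)%:~R| <= `|((f i).2 q)%:~R| / (N.+1)%:R]).
  apply: (D_fin hD) => i; have [[a b c d] e'] := hf i.
  apply: (D_mono hD (D_and hD a (D_and hD b (D_and hD c (D_and hD d (e' N)))))).
  by move=> q [? [? [? [? ?]]]]; split.
have H2 : D (fun q => forall P, Stdlib.Lists.List.In P Ps ->
    [/\ (q%:Z %| mpoly.meval (fun i => z i q) P - 0)%Z, csum P < l q &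
        l q ^+ (Mx * (dg P * n)).+1 < q%:Z]).
  apply: (D_seq hD) => P hP.
  have a := hV P hP.
  have b := hl1 `|csum P|%N.
  have c := hl2 (Mx * (dg P * n)).+1.
  apply: (D_mono hD (D_and hD a (D_and hD b c))) => q [a' [b' c']]; split => //.
  apply: le_lt_trans b'; rewrite abszE; exact: ler_norm.
have H3 := hl1 0%N.
have [q [h1 [h2 [hq hl0]]]] := D_ex hD (D_and hD H1 (D_and hD H2 (D_and hD hp H3))).
have l1 : 1 <= l q.
  move: hl0; rewrite /=; case: (l q) => // k; case: k.
pose y i : rat := ((f i).1.2 q)%:~R / ((f i).2 q)%:~R.
exists (\row_i ratr (y i)); split.
  exists y; split => // P hP.
  have [a b c] := h2 P hP.
  apply: (@key1 n q P (fun i => z i q)) => //.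
  - by move=> i; case: (h1 i).
  - by move=> i; case: (h1 i).
  apply: (@bound_q n q P _ _ (l q) Mx) => //.
  - move=> i; case: (h1 i) => a' _ _ _ _; apply: le_trans (ltW a') _.
    apply: ler_weXn2l; first exact: l1.
    exact: (@leq_bigmax _ (fun i => (f i).1.1) i).
  - move=> i; case: (h1 i) => _ a' _ _ _; apply: le_trans (ltW a') _.
    apply: ler_weXn2l; first exact: l1.
    exact: (@leq_bigmax _ (fun i => (f i).1.1) i).
apply: eB; split => // i j; rewrite ord1 /ball /= mxE.
case: (h1 j) => _ _ k0 _ hc.
set a : R := ((f j).1.2 q)%:~R in hc *.
set b : R := ((f j).2 q)%:~R in hc *.
have b0 : b != 0 by rewrite /b intr_eq0.
have -> : ratr (y j) = a / b by rewrite /y rmorphM fmorphV /= !ratr_int.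
apply: le_lt_trans hN.
have -> : x 0 j - a / b = - ((a - x 0 j * b) / b).
  by rewrite mulrBl mulfK // opprB.
rewrite normrN normrM normfV ler_pdivrMr ?normr_gt0 //.
by rewrite [_^-1 * _]mulrC.
Qed.

Local Open Scope classical_set_scope.

Section Cont.
Variables (R : realType) (n : nat).

Lemma cont_sum (I : Type) (s : seq I) (F : I -> 'rV[R]_n -> R) :
  (forall m, continuous (F m)) -> continuous (fun x => \sum_(m <- s) F m x).
Proof.
move=> hF; elim: s => [|a s IH].
  have -> : (fun x : 'rV[R]_n => \sum_(m <- [::]) F m x) = fun=> 0.
    by apply: boolp.funext => x; rewrite big_nil.
  exact: cst_continuous.
have -> : (fun x : 'rV[R]_n => \sum_(m <- a :: s) F m x) = F a + (fun x => \sum_(m <- s) F m x).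
  by apply: boolp.funext => x; rewrite big_cons.
by move=> x; apply: continuousD; [exact: hF | exact: IH].
Qed.

Lemma cont_prod (I : Type) (s : seq I) (F : I -> 'rV[R]_n -> R) :
  (forall m, continuous (F m)) -> continuous (fun x => \prod_(m <- s) F m x).
Proof.
move=> hF; elim: s => [|a s IH].
  have -> : (fun x : 'rV[R]_n => \prod_(m <- [::]) F m x) = fun=> 1.
    by apply: boolp.funext => x; rewrite big_nil.
  exact: cst_continuous.
have -> : (fun x : 'rV[R]_n => \prod_(m <- a :: s) F m x) = F a \* (fun x => \prod_(m <- s) F m x).
  by apply: boolp.funext => x; rewrite big_cons.
by move=> x; apply: continuousM; [exact: hF | exact: IH].
Qed.

Lemma cont_pev (P : mpoly.mpoly n int) :
  continuous (fun x : 'rV[R]_n => pev (fun i => x 0 i) P).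
Proof.
rewrite /pev /mpoly.mmap; apply: cont_sum => m.
have -> : (fun x : 'rV[R]_n => (mpoly.mcoeff m P)%:~R * mpoly.mmap1 (fun i => x 0 i) m)
   = (fun=> (mpoly.mcoeff m P)%:~R) \* (fun x : 'rV[R]_n => mpoly.mmap1 (fun i => x 0 i) m).
  by [].
move=> x; apply: continuousM; first exact: cst_continuous.
rewrite /mpoly.mmap1; apply: cont_prod => i.
have -> : (fun x : 'rV[R]_n => x 0 i ^+ mpoly.fun_of_multinom m i) =
  (fun x => \prod_(j <- index_enum 'I_(mpoly.fun_of_multinom m i)) x 0 i).
  apply: boolp.funext => y; by rewrite prodr_const card_ord.
apply: cont_prod => j; exact: coord_continuous.
Qed.
End Cont.

Lemma closure_sub_real (R : realType) (n : nat) (Ps : seq (mpoly.mpoly n int)) :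
  closure (@rational_points R n Ps) `<=` @real_points R n Ps.
Proof.
move=> x hx P hP.
pose S := (fun x : 'rV[R]_n => pev (fun i => x 0 i) P) @^-1` [set 0 : R].
have cS : closed S.
  apply: preimage_closed; last exact: closed_eq.
  by move=> y _; apply: cont_pev.
have sub : @rational_points R n Ps `<=` S.
  move=> w [y [hy ->]]; rewrite /S /=.
  have -> : (fun i => (\row_i0 ratr (y i0) : 'rV[R]_n) 0 i) = (ratr : {rmorphism rat -> R}) \o y.
    by apply: boolp.funext => i; rewrite mxE.
  rewrite -pev_rmorph; have := hy P hP; rewrite /pev => ->; exact: rmorph0.
have := closureS sub; rewrite -(proj1 (closure_id S) cS) => h.
exact: h.
Qed.

Local Open Scope classical_set_scope.

Lemma numR (R : realType) (w : rat) : ((numq w)%:~R : R) = ratr w * (denq w)%:~R.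
Proof. by rewrite -[LHS]ratr_int numqE rmorphM /= ratr_int. Qed.

Lemma num_bound (R : realType) (xr : R) (w : rat) : `|xr - ratr w| < 1 ->
  `|numq w| <= ((Num.Def.trunc `|xr|).+2)%:Z * `|denq w|.
Proof.
move=> h.
have h1 : `|ratr w : R| <= ((Num.Def.trunc `|xr|).+2)%:R.
  have -> : (ratr w : R) = xr - (xr - ratr w) by rewrite opprB addrC subrK.
  apply: le_trans (ler_normB _ _) _.
  rewrite -(addn1 (Num.Def.trunc `|xr|).+1) natrD.
  apply: lerD; last exact: ltW.
  exact: ltW (truncnS_gt _).
rewrite -(ler_int R) intrM /=. rewrite !intr_norm numR normrM.
apply: ler_wpM2r => //.
Qed.

Lemma close_bound (R : realType) (xr : R) (w : rat) (N J : nat) : (N <= J)%N ->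
  `|xr - ratr w| < (J.+1%:R)^-1 ->
  `|((numq w)%:~R : R) - xr * (denq w)%:~R| <= `|((denq w)%:~R : R)| / N.+1%:R.
Proof.
move=> hNJ h.
rewrite numR -mulrBl normrM distrC mulrC ler_wpM2l //.
apply: le_trans (ltW h) _.
by rewrite lef_pV2 ?posrE ?ltr0n // ler_nat.
Qed.

Lemma nat_lt_abs (K : nat) (L : int) : K%:Z < L -> (K < `|L|%N)%N.
Proof. by case: L => // m; rewrite ltz_nat. Qed.

Lemma closure_sub_loc (R : realType) (D : (nat -> Prop) -> Prop) (l : hyp) (n : nat)
    (Ps : seq (mpoly.mpoly n int)) :
  nonprincipal_ultrafilter D -> D (fun q => prime q) -> good_l D l ->
  closure (@rational_points R n Ps) `<=` @loc_ultraproduct R D l n Ps.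
Proof.
move=> hD hp [hl1 hl2] x hx.
have hW : forall j : nat, exists w : 'I_n -> rat,
    (forall P, Stdlib.Lists.List.In P Ps -> pev w P = 0) /\
    (forall i, `|x 0 i - ratr (w i)| < (j.+1%:R)^-1).
  move=> j.
  have e0 : 0 < (j.+1%:R : R)^-1 by rewrite invr_gt0 ltr0n.
  have [X [[w [hw ->]] hb]] := hx _ (nbhsx_ballx x _ e0).
  exists w; split => // i.
  by have := hb.2 0 i; rewrite mxE /ball /=.
have [W hWp] := boolp.choice hW.
pose h j : nat := (\max_(i < n) maxn `|numq (W j i)|%N `|denq (W j i)|%N)%N.
pose L q : nat := `|l q|%N.
pose J q : nat := (\max_(j < (L q).+1 | (h j < L q)%N) j)%N.
have J_ge : forall q j, (h j < L q)%N -> (j <= L q)%N -> (j <= J q)%N.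
  move=> q j h1 h2.
  have := @leq_bigmax_cond _ (fun j : 'I_(L q).+1 => (h j < L q)%N) (fun j => nat_of_ord j) (Ordinal (h2 : (j < (L q).+1)%N)) h1.
  by rewrite /J.
have J_good : forall q, (h 0 < L q)%N -> (h (J q) < L q)%N.
  move=> q h0.
  have : (0 < #|[pred j : 'I_(L q).+1 | (h j < L q)%N]|)%N.
    by apply/card_gt0P; exists ord0.
  move=> /(eq_bigmax_cond (fun j => nat_of_ord j)) [j0 hj0 e].
  by rewrite /J e.
pose k1 (i : 'I_n) : hyp := fun q => numq (W (J q) i).
pose k2 (i : 'I_n) : hyp := fun q => denq (W (J q) i).
pose z (i : 'I_n) : hyp := fun q =>
  Posz (nat_of_ord (((numq (W (J q) i))%:~R / (denq (W (J q) i))%:~R) : 'F_q)).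
pose M (i : 'I_n) : nat := (Num.Def.trunc `|x 0 i|).+2.
have HG : D (fun q => [/\ prime q, (h 0%N < L q)%N, 0 < l q & l q < q%:Z]).
  have a := hl1 (h 0%N). have b := hl1 0%N. have c := hl2 1%N.
  apply: (D_mono hD (D_and hD hp (D_and hD a (D_and hD b c)))) => q [? [a' [? c']]].
  by split => //; exact: nat_lt_abs.
have Gfacts : forall q, [/\ prime q, (h 0%N < L q)%N, 0 < l q & l q < q%:Z] ->
   forall i, [/\ `|k1 i q| < l q, `|k2 i q| < l q & ~~ (q%:Z %| k2 i q)%Z].
  move=> q [pq h0 l0 lq] i.
  have hJ := J_good q h0.
  have hn : (`|k1 i q|%N < L q)%N.
    apply: leq_ltn_trans hJ; apply: leq_trans (leq_maxl _ _) _.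
    exact: (@leq_bigmax _ (fun i => maxn `|numq (W (J q) i)|%N `|denq (W (J q) i)|%N) i).
  have hd : (`|k2 i q|%N < L q)%N.
    apply: leq_ltn_trans hJ; apply: leq_trans (leq_maxr _ _) _.
    exact: (@leq_bigmax _ (fun i => maxn `|numq (W (J q) i)|%N `|denq (W (J q) i)|%N) i).
  have Ll : (L q)%:Z = l q by rewrite /L abszE gtr0_norm.
  have Lq : (L q < q)%N by rewrite -ltz_nat Ll.
  split.
  - by rewrite -abszE -Ll ltz_nat.
  - by rewrite -abszE -Ll ltz_nat.
  apply/negP; rewrite dvdzE /= => hdv.
  have := dvdn_leq _ hdv; rewrite absz_gt0 denq_neq0 => /(_ isT) hle.
  lia.
have l1 : forall q, 0 < l q -> 1 <= l q.
  by move=> q; case: (l q) => // k; case: k.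
have FR : forall i, frac_rep D l (M i) (z i) (k1 i) (k2 i).
  move=> i; split.
  - apply: (D_mono hD HG) => q Gq; have [a _ _] := Gfacts q Gq i.
    apply: lt_le_trans a _; apply: ler_eXnr => //; apply: l1; by case: Gq.
  - apply: (D_mono hD HG) => q Gq; have [_ a _] := Gfacts q Gq i.
    apply: lt_le_trans a _; apply: ler_eXnr => //; apply: l1; by case: Gq.
  - apply: (D_mono hD (@D_T D hD)) => q _; exact: denq_neq0.
  - apply: (D_mono hD HG) => q Gq; have [_ _ nd] := Gfacts q Gq i; case: Gq => pq _ _ _.
    move: nd; rewrite /= !dvd_Fq // => nd.
    by rewrite rmorphB rmorphM /= /z (Fp_val q _ pq) divfK ?subrr.
exists z; split.
- move=> P hP; apply: (D_mono hD HG) => q Gq.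
  have pq : prime q by case: Gq.
  apply: (@key2 n q P (W (J q)) pq ((hWp (J q)).1 P hP)) => i.
  by have [_ _ nd] := Gfacts q Gq i.
- move=> i; exists (M i), (k1 i), (k2 i); split; first exact: FR.
  apply: (D_mono hD (@D_T D hD)) => q _ /=.
  apply: num_bound; apply: lt_le_trans ((hWp (J q)).2 i) _.
  by rewrite invf_le1 ?ltr0n // ler1n.
- move=> i; exists (M i), (k1 i), (k2 i); split; first exact: FR.
  move=> N; have a := hl1 (maxn (h N) N).
  apply: (D_mono hD (D_and hD HG a)) => q [Gq aq].
  have hNJ : (N <= J q)%N.
    have aq' := @nat_lt_abs _ _ aq.
    apply: J_ge; first exact: leq_ltn_trans (leq_maxl _ _) aq'.
    exact: ltnW (leq_ltn_trans (leq_maxr _ _) aq').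
  exact: close_bound hNJ ((hWp (J q)).2 i).
Qed.

End Helpers.

Theorem proposition3p7 (R : realType) (D : (nat -> Prop) -> Prop) (l : hyp)
    (n : nat) (Ps : seq (mpoly.mpoly n int)) :
  nonprincipal_ultrafilter D -> D (fun q => prime q) -> good_l D l ->
  @loc_ultraproduct R D l n Ps = closure (@rational_points R n Ps) /\
  closure (@rational_points R n Ps) `<=` @real_points R n Ps.
Proof.
move=> hD hp hl; split.
  apply: boolp.funext => x; apply: boolp.propext; split => hx.
    exact: (@Helpers.loc_sub_closure R D l n Ps hD hp hl x hx).
  exact: (@Helpers.closure_sub_loc R D l n Ps hD hp hl x hx).
exact: (@Helpers.closure_sub_real R n Ps).
Qed.
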